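(* For every integer $n\ge1$ and every $u\in V$, $\Pr(E_{1u})<\dfrac{3}{\ln(n+1)}$.
   Context: For an integer $n\ge1$, the $n$-octahedral graph $G'_n=(V,E')$ is the undirected graph with vertex set $V=\{u\in\mathbb{Z}^3:|u_1|+|u_2|+|u_3|=n\}$ and edge set $E'=\{\{v,w\}\subset V: v\neq w,\ |v_i-w_i|\le 1 \text{ for all } i=1,2,3\}$. For $u,v\in V$, $d_{uv}$ denotes the shortest-path distance in $G'_n$, and $Z_u=\left(\sum_{w\in V\setminus\{u\}} d_{uw}^{-2}\right)^{-1}$. The OSW random graph $G_n=(V,E)$ is the directed graph in which, for every $\{u,v\}\in E'$, both $(u,v),(v,u)\in E$, and in addition each vertex $u\in V$, independently of the others, chooses one vertex $v\in V\setminus\{u\}$ with probability $Z_u d_{uv}^{-2}$ and the long-range edge $(u,v)$ is added; $C_{uv}$ denotes the event that $u$ chooses $v$. For an ordered pair $(x,y)$ of distinct vertices, say $(x,y)$ is of type $s$ if $\{x,y\}\in E'$, and of type $w$ if $d_{xy}\ge2$ and $C_{xy}$ occurs. A C3 rooted at $u$ of type $(t_1,t_2,t_3)\in\{s,w\}^3$ is a triple $(u,a,b)$ of pairwise distinct vertices such that $(u,a)$ is of type $t_1$, $(a,b)$ is of type $t_2$ and $(b,u)$ is of type $t_3$. $E_{1u}$ is the event that there exists a C3 rooted at $u$ of type $(s,s,w)$. *)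

(* Defs.v *)
From Stdlib Require Import ZArith Reals.
From HB Require Import structures.
From mathcomp Require Import all_boot.

Set Implicit Arguments.
Unset Strict Implicit.
Unset Printing Implicit Defensive.

(* Points of the cube [-n,n]^3, coordinate i : 'I_(2n+1) encodes i - n. *)
Definition cube (n : nat) := ('I_(2 * n + 1) * 'I_(2 * n + 1) * 'I_(2 * n + 1))%type.

Definition zc (n : nat) (i : 'I_(2 * n + 1)) : Z := (Z.of_nat i - Z.of_nat n)%Z.

Definition c1 n (x : cube n) : Z := zc x.1.1.
Definition c2 n (x : cube n) : Z := zc x.1.2.
Definition c3 n (x : cube n) : Z := zc x.2.

Definition on_oct (n : nat) (x : cube n) : bool :=
  Z.eqb (Z.abs (c1 x) + Z.abs (c2 x) + Z.abs (c3 x)) (Z.of_nat n).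

Definition V (n : nat) : finType := {x : cube n | on_oct x}.

Definition vc1 n (u : V n) : Z := c1 (val u).
Definition vc2 n (u : V n) : Z := c2 (val u).
Definition vc3 n (u : V n) : Z := c3 (val u).

Definition adj (n : nat) (v w : V n) : bool :=
  [&& v != w,
      Z.leb (Z.abs (vc1 v - vc1 w)) 1,
      Z.leb (Z.abs (vc2 v - vc2 w)) 1 &
      Z.leb (Z.abs (vc3 v - vc3 w)) 1].

Fixpoint ball (n : nat) (k : nat) (u : V n) : {set V n} :=
  match k with
  | 0 => [set u]
  | k'.+1 => ball k' u :|: [set w | [exists x in ball k' u, adj x w]]
  end.

(* Shortest-path distance d_{uv}: least k with v in ball k u
   (G'_n is connected, so some k < #|V| works). *)
Definition dist (n : nat) (u v : V n) : nat :=
  find (fun k => v \in ball k u) (iota 0 #|V n|.+1).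

Definition Zn (n : nat) (u : V n) : R :=
  Rinv (\big[Rplus/R0]_(w : V n | w != u) Rinv (INR (dist u w) ^ 2)).

Definition pchoose (n : nat) (u v : V n) : R :=
  if v == u then R0 else Rmult (Zn u) (Rinv (INR (dist u v) ^ 2)).

(* An outcome of the long-range choices is f : V -> V (f u = the vertex chosen
   by u); independent choices give the product weight. *)
Definition weight (n : nat) (f : {ffun V n -> V n}) : R :=
  \big[Rmult/R1]_(x : V n) pchoose x (f x).

Definition Pr (n : nat) (E : pred {ffun V n -> V n}) : R :=
  \big[Rplus/R0]_(f : {ffun V n -> V n} | E f) weight f.

(* Pair types. C_{xy} occurs in outcome f iff f x = y. *)
Definition type_s (n : nat) (x y : V n) : bool := adj x y.
Definition type_w (n : nat) (f : {ffun V n -> V n}) (x y : V n) : bool :=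
  (2 <= dist x y) && (f x == y).

Definition E1u (n : nat) (u : V n) : pred {ffun V n -> V n} :=
  fun f => [exists a : V n, exists b : V n,
    [&& u != a, a != b, u != b, type_s u a, type_s a b & type_w f b u]].

(* Main.v *)
Require Import Defs.
From Stdlib Require Import Reals Lra Lia ZArith.
From HB Require Import structures.
From mathcomp Require Import all_boot.
From mathcomp Require Import zify.

Set Implicit Arguments.
Unset Strict Implicit.
Unset Printing Implicit Defensive.


Lemma vc_norm n (v : V n) :
  (Z.abs (vc1 v) + Z.abs (vc2 v) + Z.abs (vc3 v) = Z.of_nat n)%Z.
Proof. by have := valP v; rewrite /on_oct => /Z.eqb_eq. Qed.

Lemma V_inj n (v w : V n) :
  vc1 v = vc1 w -> vc2 v = vc2 w -> vc3 v = vc3 w -> v = w.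
Proof.
case: v => [[[a b] c] hv]; case: w => [[[a' b'] c'] hw].
rewrite /vc1 /vc2 /vc3 /Defs.c1 /Defs.c2 /Defs.c3 /zc /= => h1 h2 h3.
apply: val_inj => /=.
have -> : a = a' by apply: ord_inj; lia.
have -> : b = b' by apply: ord_inj; lia.
have -> : c = c' by apply: ord_inj; lia.
by [].
Qed.

Definition zord n (x : Z) : option 'I_(2 * n + 1) :=
  insub (Z.to_nat (x + Z.of_nat n)).

Definition mkV n (d : V n) (x y z : Z) : V n :=
  match zord n x, zord n y, zord n z with
  | Some a, Some b, Some c => odflt d (insub ((a, b), c))
  | _, _, _ => d
  end.

Lemma zord_spec n x : (Z.abs x <= Z.of_nat n)%Z ->
  exists a, zord n x = Some a /\ zc a = x.
Proof.
move=> hx; rewrite /zord; case: insubP => [a Ha Hv|Hn].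
  by exists a; split => //; rewrite /zc Hv; lia.
exfalso; move: Hn => /negP; apply; apply/ltP; lia.
Qed.

Lemma mkV_spec n (d : V n) x y z :
  (Z.abs x + Z.abs y + Z.abs z = Z.of_nat n)%Z ->
  [/\ vc1 (mkV d x y z) = x, vc2 (mkV d x y z) = y & vc3 (mkV d x y z) = z].
Proof.
move=> h.
have [a [ha ea]] := zord_spec (n := n) (x := x) ltac:(lia).
have [b [hb eb]] := zord_spec (n := n) (x := y) ltac:(lia).
have [c [hc ec]] := zord_spec (n := n) (x := z) ltac:(lia).
rewrite /mkV ha hb hc; case: insubP => [v Hv Hval|Hn] /=.
  by rewrite /vc1 /vc2 /vc3 Hval /Defs.c1 /Defs.c2 /Defs.c3 /=.
exfalso; move: Hn => /negP; apply; rewrite /on_oct /Defs.c1 /Defs.c2 /Defs.c3 /=.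
apply/Z.eqb_eq; lia.
Qed.

Lemma adjP n (v w : V n) :
  adj v w = true <->
  [/\ v <> w, (Z.abs (vc1 v - vc1 w) <= 1)%Z, (Z.abs (vc2 v - vc2 w) <= 1)%Z
     & (Z.abs (vc3 v - vc3 w) <= 1)%Z].
Proof.
rewrite /adj; split.
  by case/and4P => /eqP h1 /Z.leb_le h2 /Z.leb_le h3 /Z.leb_le h4.
case=> h1 h2 h3 h4; apply/and4P; split; try by apply/Z.leb_le.
by apply/eqP.
Qed.

Lemma ball_step n (u v w : V n) k :
  v \in ball k u -> adj v w -> w \in ball k.+1 u.
Proof.
move=> hv hvw /=; rewrite in_setU; apply/orP; right.
by rewrite inE; apply/existsP; exists v; rewrite hv.
Qed.

Lemma ball0 n (u : V n) : ball 0 u = [set u].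
Proof. by []. Qed.

Lemma dist_le n (u v : V n) k :
  v \in ball k u -> (k <= #|V n|)%N -> (Defs.dist u v <= k)%N.
Proof.
move=> hv hk; rewrite /Defs.dist.
case: (leqP (find (fun k => v \in ball k u) (iota 0 #|V n|.+1)) k) => // H.
have := before_find 0%N H.
by rewrite nth_iota // ?add0n ?hv //; rewrite ltnS.
Qed.

Lemma dist_pos n (u v : V n) : v != u -> (0 < Defs.dist u v)%N.
Proof.
move=> hvu; rewrite lt0n; apply/negP => /eqP h.
have hs : (0 < size (iota 0 #|V n|.+1))%N by rewrite size_iota.
have hh : has (fun k => v \in ball k u) (iota 0 #|V n|.+1).
  by rewrite has_find; move: h; rewrite /Defs.dist => ->.
have := nth_find 0%N hh; move: h; rewrite /Defs.dist => ->.
by rewrite nth_iota // add0n ball0 inE (negbTE hvu).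
Qed.

Lemma cardV n (u : V n) : (n < #|V n|)%N.
Proof.
pose f (i : 'I_n.+1) : V n := mkV u (Z.of_nat i) (Z.of_nat n - Z.of_nat i) 0.
have hf : injective f.
  move=> i j; rewrite /f => h.
  have hi : (Z.abs (Z.of_nat i) + Z.abs (Z.of_nat n - Z.of_nat i) + Z.abs 0 = Z.of_nat n)%Z.
    have := ltn_ord i; lia.
  have hj : (Z.abs (Z.of_nat j) + Z.abs (Z.of_nat n - Z.of_nat j) + Z.abs 0 = Z.of_nat n)%Z.
    have := ltn_ord j; lia.
  have [a1 _ _] := mkV_spec u hi; have [a2 _ _] := mkV_spec u hj.
  apply: ord_inj; move: a1 a2; rewrite h => -> ?; lia.
by have := leq_card f hf; rewrite card_ord.
Qed.


Definition sg (t : Z) : Z := if (t <? 0)%Z then (-1)%Z else 1%Z.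

Section Sector.
Variables (n : nat) (b : V n).
Local Notation x := (vc1 b).
Local Notation y := (vc2 b).
Local Notation z := (vc3 b).

Definition ptZ (s : nat) (K I : Z) : Z * Z * Z :=
  match s with
  | 0 => (x - sg x * K, y + sg y * I, z + sg z * (K - I))%Z
  | 1 => (x + sg x * (K - I), y - sg y * K, z + sg z * I)%Z
  | _ => (x + sg x * I, y + sg y * (K - I), z - sg z * K)%Z
  end.

Definition pt (s k i : nat) := ptZ s (Z.of_nat k) (Z.of_nat i).

Definition Pz (s : nat) : Z :=
  match s with 0 => Z.abs x | 1 => Z.abs y | _ => Z.abs z end.

Definition psi (s k i : nat) : V n :=
  mkV b (pt s k i).1.1 (pt s k i).1.2 (pt s k i).2.

Ltac sgcases := rewrite /sg; case: (Z.ltb_spec x 0); case: (Z.ltb_spec y 0);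
  case: (Z.ltb_spec z 0); intros; lia.

Lemma pt_norm s k i : (i <= k)%N -> (Z.of_nat k <= Pz s)%Z ->
  (Z.abs (pt s k i).1.1 + Z.abs (pt s k i).1.2 + Z.abs (pt s k i).2 = Z.of_nat n)%Z.
Proof.
have hn := vc_norm b.
move=> hik; rewrite /pt; case: s => [|[|s]] /= hk; sgcases.
Qed.

Lemma psi_coords s k i : (i <= k)%N -> (Z.of_nat k <= Pz s)%Z ->
  [/\ vc1 (psi s k i) = (pt s k i).1.1, vc2 (psi s k i) = (pt s k i).1.2
    & vc3 (psi s k i) = (pt s k i).2].
Proof. move=> h1 h2; exact: mkV_spec (pt_norm h1 h2). Qed.

Lemma psi_ball s k i : (i <= k)%N -> (Z.of_nat k <= Pz s)%Z ->
  psi s k i \in ball k b.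
Proof.
elim: k i => [|k IH] i hik hk.
  have -> : i = 0%N by lia.
  rewrite ball0 inE; apply/eqP.
  have [h1 h2 h3] := psi_coords (s := s) (leqnn 0) hk.
  apply: V_inj; rewrite ?h1 ?h2 ?h3 /pt; case: s {hk h1 h2 h3} => [|[|s]] /=; lia.
have hk' : (Z.of_nat k <= Pz s)%Z by lia.
have hi' : (i.-1 <= k)%N by lia.
have hpi : Z.of_nat i.-1 = Z.max 0 (Z.of_nat i - 1).
  destruct i as [|j]; first by [].
  change (j.+1.-1) with j; rewrite Nat2Z.inj_succ; lia.
apply: (ball_step (IH _ hi' hk')).
have [a1 a2 a3] := psi_coords hi' hk'.
have [b1 b2 b3] := psi_coords hik hk.
apply/adjP; rewrite a1 a2 a3 b1 b2 b3; split.
- move=> E; move: (f_equal (@vc1 n) E) (f_equal (@vc2 n) E) (f_equal (@vc3 n) E).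
  rewrite a1 a2 a3 b1 b2 b3.
  clear IH; rewrite /pt Nat2Z.inj_succ; case: s {hk hk' a1 a2 a3 b1 b2 b3 E} => [|[|s]] /=; sgcases.
- clear IH; rewrite /pt Nat2Z.inj_succ; case: s {hk hk' a1 a2 a3 b1 b2 b3} => [|[|s]] /=; sgcases.
- clear IH; rewrite /pt Nat2Z.inj_succ; case: s {hk hk' a1 a2 a3 b1 b2 b3} => [|[|s]] /=; sgcases.
- clear IH; rewrite /pt Nat2Z.inj_succ; case: s {hk hk' a1 a2 a3 b1 b2 b3} => [|[|s]] /=; sgcases.
Qed.

End Sector.


Lemma Zeqb_ax : Equality.axiom Z.eqb.
Proof. move=> x y; apply: (iffP idP); by move/Z.eqb_eq. Qed.
HB.instance Definition _ := hasDecEq.Build Z Zeqb_ax.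

Definition clip (t : Z) : Z := Z.max (-2) (Z.min 2 t).

Definition surfb (c d : Z * Z * Z) : bool :=
  Z.eqb ((Z.abs (c.1.1 + d.1.1) - Z.abs c.1.1) + (Z.abs (c.1.2 + d.1.2) - Z.abs c.1.2)
         + (Z.abs (c.2 + d.2) - Z.abs c.2)) 0.

Definition small1 (d : Z * Z * Z) : bool :=
  [&& Z.leb (Z.abs d.1.1) 1, Z.leb (Z.abs d.1.2) 1 & Z.leb (Z.abs d.2) 1].

Definition closeb (a d : Z * Z * Z) : bool :=
  small1 (d.1.1 - a.1.1, d.1.2 - a.1.2, d.2 - a.2)%Z.

Definition trip (l : seq Z) : seq (Z * Z * Z) :=
  flatten [seq flatten [seq [seq (x, y, z) | z <- l] | y <- l] | x <- l].

Definition L5 : seq Z := [:: (-2)%Z; (-1)%Z; 0%Z; 1%Z; 2%Z].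
Definition L3 : seq Z := [:: (-1)%Z; 0%Z; 1%Z].

Definition good (c d : Z * Z * Z) : bool :=
  [&& surfb c d, ~~ small1 d & has (fun a => surfb c a && closeb a d) (trip L3)].

Lemma count_good : all (fun c => (count (good c) (trip L5) <= 12)%N) (trip L5).
Proof. by vm_compute. Qed.

Lemma mem_L5 t : (-2 <= t <= 2)%Z -> t \in L5.
Proof.
move=> h; have : t = (-2)%Z \/ t = (-1)%Z \/ t = 0%Z \/ t = 1%Z \/ t = 2%Z by lia.
by case=> [->|[->|[->|[->| ->]]]].
Qed.

Lemma mem_L3 t : (-1 <= t <= 1)%Z -> t \in L3.
Proof.
move=> h; have : t = (-1)%Z \/ t = 0%Z \/ t = 1%Z by lia.
by case=> [->|[->| ->]].
Qed.

Lemma mem_trip (l : seq Z) x y z : x \in l -> y \in l -> z \in l -> (x, y, z) \in trip l.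
Proof.
move=> hx hy hz; apply/flattenP.
exists (flatten [seq [seq (x, y0, z0) | z0 <- l] | y0 <- l]); first by apply: map_f.
apply/flattenP; exists [seq (x, y, z0) | z0 <- l]; first by apply: (map_f (fun y0 => [seq (x, y0, z0) | z0 <- l])).
by apply: map_f.
Qed.

Lemma clip_ok t d : (Z.abs d <= 2)%Z ->
  (Z.abs (clip t + d) - Z.abs (clip t) = Z.abs (t + d) - Z.abs t)%Z.
Proof. rewrite /clip; lia. Qed.

Definition Bset n (u : V n) : {set V n} :=
  [set b | [exists a, [&& u != a, a != b, u != b, adj u a & adj a b]]
           && (2 <= Defs.dist b u)%N].

Lemma lin6 (A B C D E F N : Z) : (A + B + C = N -> D + E + F = N ->
  (D - A) + (E - B) + (F - C) = 0)%Z.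
Proof. lia. Qed.

Lemma tri_bound (p q r : Z) : (Z.abs (p - q) <= 1 -> Z.abs (q - r) <= 1 ->
  -2 <= r - p <= 2)%Z.
Proof. lia. Qed.

Lemma absd1 (p q : Z) : (Z.abs (p - q) <= 1 -> -1 <= q - p <= 1)%Z.
Proof. lia. Qed.

Lemma absd2 (p q r : Z) : (Z.abs (p - q) <= 1 -> Z.abs (q - r) <= 1 ->
  Z.abs (r - p) <= 2)%Z.
Proof. lia. Qed.

Lemma absd3 (p q r : Z) : (Z.abs (q - r) <= 1 -> Z.abs (r - p - (q - p)) <= 1)%Z.
Proof. lia. Qed.

Lemma absd4 (p q : Z) : (Z.abs (p - q) <= 1 -> Z.abs (q - p) <= 2)%Z.
Proof. lia. Qed.

Lemma card_B n (u : V n) : (#|Bset u| <= 12)%N.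
Proof.
pose c := (clip (vc1 u), clip (vc2 u), clip (vc3 u)).
pose g (b : V n) : Z * Z * Z := (vc1 b - vc1 u, vc2 b - vc2 u, vc3 b - vc3 u)%Z.
have hc : c \in trip L5.
  rewrite /c; apply: mem_trip; apply: mem_L5; rewrite /clip; lia.
have hcnt := allP count_good c hc.
have hg : forall b, b \in Bset u -> g b \in filter (good c) (trip L5).
  move=> b; rewrite inE => /andP [/existsP [a /and5P [hua hab hub h1 h2]] hd].
  move/adjP: h1 => [_ a1 a2 a3]; move/adjP: h2 => [_ b1 b2 b3].
  have nu := vc_norm u; have na := vc_norm a; have nb := vc_norm b.
  rewrite mem_filter; apply/andP; split; last first.
    by apply: mem_trip; apply: mem_L5; rewrite /g /=; apply: tri_bound; eassumption.
  apply/and3P; split.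
  - rewrite /surfb /c /g /=; apply/Z.eqb_eq.
    rewrite !clip_ok; try (apply: absd2; eassumption).
    rewrite !Zplus_minus; exact: lin6 nu nb.
  - apply/negP => /and3P [/Z.leb_le e1 /Z.leb_le e2 /Z.leb_le e3].
    have hadj : adj b u.
      apply/adjP; split; [by move=> E; move: hub; rewrite E eqxx | exact: e1 | exact: e2 | exact: e3].
    have hu1 : u \in ball 1 b by apply: (ball_step (v := b)); rewrite // ball0 inE.
    have hcard := cardV u.
    have := dist_le hu1; move: hd hcard; clear; move=> hd hcard /(_ ltac:(lia)); lia.
  - apply/hasP; exists (vc1 a - vc1 u, vc2 a - vc2 u, vc3 a - vc3 u)%Z.
      by apply: mem_trip; apply: mem_L3; apply: absd1; eassumption.
    apply/andP; split.
      rewrite /surfb /c /=; apply/Z.eqb_eq.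
      rewrite !clip_ok; try (apply: absd4; eassumption).
      rewrite !Zplus_minus; exact: lin6 nu na.
    rewrite /closeb /small1 /g /=; apply/and3P; split; apply/Z.leb_le; apply: absd3; eassumption.
rewrite cardE -(size_map g).
apply: leq_trans hcnt; rewrite -size_filter.
apply: uniq_leq_size.
  rewrite map_inj_in_uniq ?enum_uniq //.
  move=> b1 b2 _ _ [e1 e2 e3]; apply: V_inj; lia.
by move=> d /mapP [b hb ->]; apply: hg; rewrite mem_enum in hb.
Qed.

Local Open Scope R_scope.



Lemma ln_le' x y : 0 < x -> x <= y -> ln x <= ln y.
Proof. move=> hx [h|->]; [apply: Rlt_le; exact: ln_increasing| lra]. Qed.

Lemma ln_step (a : R) : (0 < a) -> (ln (a + 1) <= ln a + / a).
Proof.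
move=> ha.
have -> : (a + 1 = a * (1 + / a)) by field; lra.
have hi : (0 < / a) by apply: Rinv_0_lt_compat.
rewrite ln_mult; [|lra|lra].
apply: Rplus_le_compat_l.
rewrite -{2}(ln_exp (/ a)).
apply: ln_le'; [lra|apply: exp_ineq1_le].
Qed.

Fixpoint hsum (P : nat) : R :=
  match P with 0 => R0 | S p => (hsum p + (INR p + 2) / (INR p + 1) ^ 2) end.

Lemma hsum_ge P : (1 <= P)%coq_nat -> (ln (INR P + 1) + 1 <= hsum P).
Proof.
elim: P => [|p IH] h; first lia.
case: p IH h => [|p] IH h.
  rewrite /= /INR. have := ln_step (Rlt_0_1). rewrite ln_1. move=> H. lra.
have IH' := IH ltac:(lia).
have -> : hsum p.+2 = hsum p.+1 + (INR p.+1 + 2) / (INR p.+1 + 1) ^ 2 by [].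
have hp : (0 < INR p.+1 + 1) by have := pos_INR p.+1; lra.
have := ln_step hp.
rewrite (S_INR p.+1).
have ->: (INR p.+1 + 1 + 1 = INR p.+1 + 2) by lra.
move=> H.
have E : ((INR p.+1 + 2) / (INR p.+1 + 1) ^ 2 = / (INR p.+1 + 1) + / ((INR p.+1 + 1) ^ 2)).
  field; lra.
have : 0 < / ((INR p.+1 + 1) ^ 2) by apply: Rinv_0_lt_compat; apply: pow_lt.
rewrite E; lra.
Qed.

Lemma hsum_ge0 P : (ln (INR P + 1) <= hsum P).
Proof.
case: P => [|p]; first by rewrite /= Rplus_0_l ln_1; lra.
have := hsum_ge (P := p.+1) ltac:(lia). lra.
Qed.



Lemma RplusA' : associative Rplus. Proof. move=> x y z; ring. Qed.
Lemma RplusC' : commutative Rplus. Proof. move=> x y; ring. Qed.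
Lemma Rplus0' : left_id R0 Rplus. Proof. move=> x; ring. Qed.
Lemma RmultA' : associative Rmult. Proof. move=> x y z; ring. Qed.
Lemma RmultC' : commutative Rmult. Proof. move=> x y; ring. Qed.
Lemma Rmult1' : left_id R1 Rmult. Proof. move=> x; ring. Qed.
Lemma Rmult0l' : left_zero R0 Rmult. Proof. move=> x; ring. Qed.
Lemma Rmult0r' : right_zero R0 Rmult. Proof. move=> x; ring. Qed.
Lemma RmultDl' : left_distributive Rmult Rplus. Proof. move=> x y z; ring. Qed.
Lemma RmultDr' : right_distributive Rmult Rplus. Proof. move=> x y z; ring. Qed.

HB.instance Definition _ := Monoid.isComLaw.Build R R0 Rplus RplusA' RplusC' Rplus0'.
HB.instance Definition _ := Monoid.isComLaw.Build R R1 Rmult RmultA' RmultC' Rmult1'.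
HB.instance Definition _ := Monoid.isMulLaw.Build R R0 Rmult Rmult0l' Rmult0r'.
HB.instance Definition _ := Monoid.isAddLaw.Build R Rmult Rplus RmultDl' RmultDr'.

Lemma sumR_le (I : Type) (r : seq I) (P : pred I) (F G : I -> R) :
  (forall i, P i -> F i <= G i) ->
  \big[Rplus/R0]_(i <- r | P i) F i <= \big[Rplus/R0]_(i <- r | P i) G i.
Proof.
move=> h; apply: (big_ind2 (fun x y => x <= y)); [lra | move=> *; lra | exact: h].
Qed.

Lemma sumR_ge0 (I : Type) (r : seq I) (P : pred I) (F : I -> R) :
  (forall i, P i -> 0 <= F i) -> 0 <= \big[Rplus/R0]_(i <- r | P i) F i.
Proof.
move=> h; apply: (big_ind (fun x => 0 <= x)); [lra | move=> *; lra | exact: h].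
Qed.

Lemma prodR_ge0 (I : Type) (r : seq I) (P : pred I) (F : I -> R) :
  (forall i, P i -> 0 <= F i) -> 0 <= \big[Rmult/R1]_(i <- r | P i) F i.
Proof.
move=> h; apply: (big_ind (fun x => 0 <= x)); [lra | move=> *; nra | exact: h].
Qed.

Lemma sumR_sub (I : finType) (P Q : pred I) (F : I -> R) :
  (forall i, Q i -> P i) -> (forall i, P i -> 0 <= F i) ->
  \big[Rplus/R0]_(i | Q i) F i <= \big[Rplus/R0]_(i | P i) F i.
Proof.
move=> hQP h0; rewrite [X in X <= _]big_mkcond [X in _ <= X]big_mkcond.
apply: sumR_le => i _; case: ifP => hq; first by rewrite (hQP _ hq); lra.
by case: ifP => hp; [exact: h0 | lra].
Qed.

Lemma iter_Rplus m c : iter m (Rplus c) R0 = INR m * c.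
Proof. elim: m => [|m IH] /=; first ring. rewrite IH; case: m {IH} => [|m]; rewrite /=; ring. Qed.

Lemma sumR_const (I : finType) (A : pred I) c :
  \big[Rplus/R0]_(i in A) c = INR #|A| * c.
Proof. by rewrite big_const iter_Rplus. Qed.

Lemma sumR_ord_const m c : \big[Rplus/R0]_(i < m) c = INR m * c.
Proof. by rewrite big_const_ord iter_Rplus. Qed.



Lemma inner_sum N k P c : (k <= N)%N ->
  \big[Rplus/R0]_(i < N.+1) (if [&& (1 <= k)%N, (k <= P)%N & (i <= k)%N] then c else R0)
  = if (1 <= k <= P)%N then INR k.+1 * c else R0.
Proof.
move=> hk; case: ifP => h.
  rewrite (eq_bigr (fun i : 'I_N.+1 => if (i < k.+1)%N then c else R0)); last first.
    by move=> i _; rewrite ltnS; case/andP: h => -> ->.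
  rewrite -big_mkcond -(big_ord_widen N.+1 (fun=> c)) //.
  exact: sumR_ord_const.
apply: big1 => i _; move: h.
by case: (1 <= k)%N; case: (k <= P)%N.
Qed.

Lemma outer_sum N P : (P <= N)%N ->
  \big[Rplus/R0]_(k < N.+1) (if (1 <= k <= P)%N then INR k.+1 * / (INR k ^ 2) else R0)
  = hsum P.
Proof.
elim: P => [|P IH] hP.
  by apply: big1 => k _; case: (k : nat) => [|k'].
rewrite (eq_bigr (fun k : 'I_N.+1 =>
   (if (1 <= k <= P)%N then INR k.+1 * / (INR k ^ 2) else R0) +
   (if (k == P.+1 :> nat) then INR P.+2 * / (INR P.+1 ^ 2) else R0))); last first.
  move=> k _; case: eqP => e.
    by rewrite e leqnn ltnn andbF /= Rplus_0_l.
  rewrite Rplus_0_r (leq_eqVlt k P.+1) ltnS.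
  by move/eqP/negbTE: e => ->.
rewrite big_split IH ?(ltnW hP) //.
rewrite (bigD1 (inord P.+1)) // inordK //.
rewrite eqxx big1; last first.
  move=> k hk; case: ifP => // /eqP e; move: hk; rewrite -val_eqE /= inordK // e eqxx //.
change (hsum P + (INR P.+2 * / INR P.+1 ^ 2 + R0) = hsum P + (INR P + 2) / (INR P + 1) ^ 2).
rewrite (S_INR P.+1) (S_INR P); field.
have := pos_INR P; lra.
Qed.

Lemma Rinv_ge0 r : 0 <= r -> 0 <= / r.
Proof.
move=> h; case: (Req_dec r 0) => [->|hr]; first by rewrite Rinv_0; lra.
apply: Rlt_le; apply: Rinv_0_lt_compat; lra.
Qed.

Definition Sb n (b : V n) : R :=
  \big[Rplus/R0]_(w : V n | w != b) Rinv (INR (Defs.dist b w) ^ 2).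

Section SumBound.
Variables (n : nat) (b : V n).

Definition Pn (s : nat) : nat := Z.to_nat (Pz b s).

Definition condt (t : 'I_3 * ('I_n.+1 * 'I_n.+1)) : bool :=
  [&& (1 <= t.2.1)%N, (t.2.1 <= Pn t.1)%N & (t.2.2 <= t.2.1)%N].

Definition phi (t : 'I_3 * ('I_n.+1 * 'I_n.+1)) : V n := psi b t.1 t.2.1 t.2.2.

Lemma Pz_le s : (0 <= Pz b s <= Z.of_nat n)%Z.
Proof. have := vc_norm b; case: s => [|[|s]] /=; lia. Qed.

Lemma condt_coords t : condt t ->
  [/\ (t.2.2 <= t.2.1)%N, (Z.of_nat t.2.1 <= Pz b t.1)%Z & (1 <= t.2.1)%N].
Proof.
case/and3P => h1 h2 h3; split => //.
have := Pz_le t.1; move: h2; rewrite /Pn; lia.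
Qed.

Ltac sgc := rewrite /sg; case: (Z.ltb_spec (vc1 b) 0); case: (Z.ltb_spec (vc2 b) 0);
  case: (Z.ltb_spec (vc3 b) 0); intros; lia.

Lemma phi_ne t : condt t -> phi t != b.
Proof.
move=> /condt_coords [h1 h2 h3]; apply/eqP => E.
have [a1 a2 a3] := psi_coords h1 h2.
move: a1 a2 a3; rewrite /phi in E; rewrite E /pt.
have := Pz_le t.1.
case: t h1 h2 h3 E => [[[|[|[|s]]] hs] [k i]] //= h1 h2 h3 E; sgc.
Qed.

Lemma phi_inj : {in [pred t | condt t] &, injective phi}.
Proof.
move=> t1 t2 /= /condt_coords [h1 h2 h3] /condt_coords [g1 g2 g3] E.
have [a1 a2 a3] := psi_coords h1 h2.
have [c1 c2 c3] := psi_coords g1 g2.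
move: a1 a2 a3 c1 c2 c3; rewrite /phi in E; rewrite E => -> -> ->; rewrite /pt.
case: t1 h1 h2 h3 {E} => [[s1 hs1] [k1 i1]]; case: t2 g1 g2 g3 => [[s2 hs2] [k2 i2]] /=.
move=> g1 g2 g3 h1 h2 h3 e1 e2 e3.
have [es [ek ei]] : s1 = s2 /\ (k1 = k2 :> nat) /\ (i1 = i2 :> nat).
  case: s1 hs1 h2 e1 e2 e3 => [|[|[|s1]]] hs1 h2 e1 e2 e3 //;
  case: s2 hs2 g2 e1 e2 e3 => [|[|[|s2]]] hs2 g2 e1 e2 e3 //=; move: e1 e2 e3 => /=; sgc.
subst s2; have -> : hs1 = hs2 by apply: bool_irrelevance.
by congr (_, (_, _)); apply: val_inj.
Qed.

Lemma phi_dist t : condt t -> (Defs.dist b (phi t) <= t.2.1)%N.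
Proof.
move=> /condt_coords [h1 h2 h3]; apply: dist_le; first exact: psi_ball.
have := cardV b; have := Pz_le t.1; lia.
Qed.

End SumBound.



Lemma hsum3 a b c : (1 <= a + b + c)%N ->
  ln (INR (a + b + c) + 1) + 1 <= hsum a + hsum b + hsum c.
Proof.
move=> h.
have pa := pos_INR a; have pb := pos_INR b; have pc := pos_INR c.
have L : ln (INR (a + b + c) + 1) <= ln (INR a + 1) + ln (INR b + 1) + ln (INR c + 1).
  rewrite -!ln_mult; try nra.
  apply: ln_le'; rewrite !plus_INR; first lra.
  have h1 : 0 <= INR a * INR b by nra.
  have h2 : 0 <= INR a * INR b * INR c by nra.
  have h3 : 0 <= INR b * INR c by nra.
  have h4 : 0 <= INR a * INR c by nra.
  nra.
have Ha := hsum_ge0 a; have Hb := hsum_ge0 b; have Hc := hsum_ge0 c.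
have [ha|ha] : (1 <= a)%coq_nat \/ (a = 0)%N by lia.
  have := hsum_ge ha; lra.
have [hb|hb] : (1 <= b)%coq_nat \/ (b = 0)%N by lia.
  have := hsum_ge hb; lra.
have hc : (1 <= c)%coq_nat by lia.
have := hsum_ge hc; lra.
Qed.

Lemma triple_sum (A B C : finType) (G : A -> B -> C -> R) :
  \big[Rplus/R0]_(t : A * (B * C)) G t.1 t.2.1 t.2.2 =
  \big[Rplus/R0]_(a : A) \big[Rplus/R0]_(b : B) \big[Rplus/R0]_(c : C) G a b c.
Proof.
rewrite -(pair_bigA _ (fun a q => G a q.1 q.2)); apply: eq_bigr => a _.
by rewrite (pair_bigA _ (G a)).
Qed.

Lemma Sb_ge n (b : V n) : (1 <= n)%N -> ln (INR n + 1) + 1 <= Sb b.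
Proof.
move=> hn.
set I := [set t | condt b t].
pose F (w : V n) := / (INR (Defs.dist b w) ^ 2).
have step1 : \big[Rplus/R0]_(w in phi b @: I) F w <= Sb b.
  apply: sumR_sub.
    by move=> w /imsetP [t]; rewrite inE => ht ->; exact: phi_ne.
  by move=> w _; apply: Rinv_ge0; apply: pow2_ge_0.
rewrite big_imset in step1; last first.
  by move=> t1 t2; rewrite !inE => h1 h2; apply: phi_inj.
have step2 : \big[Rplus/R0]_(t in I) / (INR t.2.1 ^ 2) <= \big[Rplus/R0]_(t in I) F (phi b t).
  apply: sumR_le => t; rewrite inE => ht.
  have hd := phi_dist ht.
  have hp := dist_pos (phi_ne ht).
  rewrite /F; apply: Rinv_le_contravar.
    apply: pow_lt; apply: lt_0_INR; lia.
  apply: pow_incr; split; [exact: pos_INR | apply: le_INR; apply/leP; exact: hd].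
have step3 : \big[Rplus/R0]_(t in I) / (INR t.2.1 ^ 2) =
    \big[Rplus/R0]_(s < 3) \big[Rplus/R0]_(k < n.+1) \big[Rplus/R0]_(i < n.+1)
      (if [&& (1 <= k)%N, (k <= Pn b s)%N & (i <= k)%N] then / (INR k ^ 2) else R0).
  rewrite -(triple_sum (fun (s : 'I_3) (k i : 'I_n.+1) =>
     if [&& (1 <= k)%N, (k <= Pn b s)%N & (i <= k)%N] then / (INR k ^ 2) else R0)).
  rewrite big_mkcond; apply: eq_bigr => -[s [k i]] _ /=.
  by rewrite inE.
have step4 : \big[Rplus/R0]_(s < 3) \big[Rplus/R0]_(k < n.+1) \big[Rplus/R0]_(i < n.+1)
      (if [&& (1 <= k)%N, (k <= Pn b s)%N & (i <= k)%N] then / (INR k ^ 2) else R0)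
    = \big[Rplus/R0]_(s < 3) hsum (Pn b s).
  apply: eq_bigr => s _.
  rewrite (eq_bigr (fun k : 'I_n.+1 => if (1 <= k <= Pn b s)%N then INR k.+1 * / (INR k ^ 2) else R0)).
    apply: outer_sum; have := Pz_le b s; rewrite /Pn; lia.
  by move=> k _; rewrite inner_sum // -ltnS.
have step5 : \big[Rplus/R0]_(s < 3) hsum (Pn b s) = hsum (Pn b 0) + hsum (Pn b 1) + hsum (Pn b 2).
  rewrite !big_ord_recl big_ord0 /=.
  change (hsum (Pn b 0) + (hsum (Pn b 1) + (hsum (Pn b 2) + R0)) =
          hsum (Pn b 0) + hsum (Pn b 1) + hsum (Pn b 2)); ring.
have hsumn : (Pn b 0 + Pn b 1 + Pn b 2 = n)%N.
  have := vc_norm b; rewrite /Pn /Pz; lia.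
have := hsum3 (a := Pn b 0) (b := Pn b 1) (c := Pn b 2).
rewrite hsumn => /(_ hn) H.
rewrite step3 step4 step5 in step2.
apply: Rle_trans H _; apply: Rle_trans step2 _; exact: step1.
Qed.



Lemma ln_ge0 n : 0 <= ln (INR n + 1).
Proof. rewrite -ln_1; apply: ln_le'; have := pos_INR n; lra. Qed.

Lemma Zn_ge0 n (x : V n) : 0 <= Zn x.
Proof. apply: Rinv_ge0; apply: sumR_ge0 => w _; apply: Rinv_ge0; apply: pow2_ge_0. Qed.

Lemma pchoose_ge0 n (x y : V n) : 0 <= pchoose x y.
Proof.
rewrite /pchoose; case: eqP => _; first lra.
apply: Rmult_le_pos; first exact: Zn_ge0.
apply: Rinv_ge0; apply: pow2_ge_0.
Qed.

Lemma weight_ge0 n (f : {ffun V n -> V n}) : 0 <= weight f.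
Proof. by apply: prodR_ge0 => x _; apply: pchoose_ge0. Qed.

Lemma row_sum n (x : V n) : (1 <= n)%N -> \big[Rplus/R0]_(y : V n) pchoose x y = 1.
Proof.
move=> hn.
rewrite (eq_bigr (fun y => if y != x then Zn x * Rinv (INR (Defs.dist x y) ^ 2) else R0)); last first.
  by move=> y _; rewrite /pchoose; case: eqP.
rewrite -big_mkcond -big_distrr /=.
have hS := Sb_ge x hn; have h0 := ln_ge0 n.
rewrite /Zn; change (/ Sb x * Sb x = 1); field; lra.
Qed.

Lemma marginal n (b y : V n) : (1 <= n)%N ->
  \big[Rplus/R0]_(f : {ffun V n -> V n}) (if f b == y then weight f else R0) = pchoose b y.
Proof.
move=> hn.
pose F (x z : V n) := if x == b then (if z == y then pchoose b y else R0) else pchoose x z.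
have E : \big[Rmult/R1]_(x : V n) \big[Rplus/R0]_(z : V n) F x z =
         \big[Rplus/R0]_(f : {ffun V n -> V n}) \big[Rmult/R1]_(x : V n) F x (f x).
  exact: bigA_distr_bigA.
transitivity (\big[Rmult/R1]_(x : V n) \big[Rplus/R0]_(z : V n) F x z).
  rewrite E; apply: eq_bigr => f _.
  rewrite /weight [RHS](bigD1 b) // [in X in if _ then X else _](bigD1 b) //.
  rewrite /F eqxx; case: eqP => e.
    rewrite e; congr (_ _ _); apply: eq_bigr => x /andP [_ hx]; by rewrite (negbTE hx).
  symmetry; apply: Rmult_0_l.
have R1' : \big[Rmult/R1]_(x | x != b) \big[Rplus/R0]_(z : V n) F x z = R1.
  by apply: big1 => x hx; rewrite /F (negbTE hx); exact: row_sum.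
rewrite (bigD1 b) //= R1'.
rewrite /F eqxx -big_mkcond big_pred1_eq.
change (pchoose b y * R1 = pchoose b y); ring.
Qed.

Lemma Pr_le n (u : V n) : (1 <= n)%N ->
  Pr (E1u u) <= \big[Rplus/R0]_(b in Bset u) pchoose b u.
Proof.
move=> hn.
have H : Pr (E1u u) <= \big[Rplus/R0]_(f : {ffun V n -> V n})
            \big[Rplus/R0]_(b in Bset u) (if f b == u then weight f else R0).
  rewrite /Pr big_mkcond; apply: sumR_le => f _.
  case: ifP => hE; last first.
    by apply: sumR_ge0 => b _; case: ifP => _; [exact: weight_ge0 | lra].
  case/existsP: hE => a /existsP [b0].
  case/andP => h1 /andP [h2 /andP [h3 /andP [h4 /andP [h5 /andP [h6 h7]]]]].
  rewrite /type_s in h4 h5.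
  have hb0 : b0 \in Bset u.
    by rewrite inE h6 andbT; apply/existsP; exists a; rewrite h1 h2 h3 h4 h5.
  rewrite (bigD1 b0) //= h7.
  have : 0 <= \big[Rplus/R0]_(i in Bset u | i != b0) (if f i == u then weight f else R0).
    by apply: sumR_ge0 => b _; case: ifP => _; [exact: weight_ge0 | lra].
  move=> hr; change (weight f <= weight f + \big[Rplus/R0]_(i in Bset u | i != b0) (if f i == u then weight f else R0)).
  lra.
apply: (Rle_trans _ _ _ H); rewrite exchange_big /=.
apply: Req_le; apply: eq_bigr => b _; exact: marginal.
Qed.



Lemma main_bound n (u : V n) : (1 <= n)%N ->
  Pr (E1u u) < 3 * / ln (INR n + 1).
Proof.
move=> hn.
have hL : 0 < ln (INR n + 1).
  rewrite -ln_1; apply: ln_increasing; first lra.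
  have h1 : (INR 1 <= INR n) by apply: le_INR; apply/leP.
  simpl in h1; lra.
set L := ln (INR n + 1) in hL *.
pose c := / 4 * / (L + 1).
have hc : 0 < c by rewrite /c; apply: Rmult_lt_0_compat; apply: Rinv_0_lt_compat; lra.
have S : \big[Rplus/R0]_(b in Bset u) pchoose b u <= \big[Rplus/R0]_(b in Bset u) c.
  apply: sumR_le => b; rewrite inE => /andP [_ hd].
  rewrite /pchoose; case: eqP => _; first lra.
  rewrite /c Rmult_comm; apply: Rmult_le_compat.
  - apply: Rinv_ge0; apply: pow2_ge_0.
  - exact: Zn_ge0.
  - apply: Rinv_le_contravar; first lra.
    have h2 : INR 2 <= INR (Defs.dist b u) by apply: le_INR; apply/leP.
    have e2 : INR 2 = 2 by simpl; lra.
    nra.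
  - rewrite /Zn; change (/ Sb b <= / (L + 1)).
    apply: Rinv_le_contravar; first lra.
    exact: Sb_ge.
rewrite sumR_const in S.
have hk : INR #|Bset u| <= 12.
  have h : INR #|Bset u| <= INR 12 by apply: le_INR; apply/leP; exact: card_B.
  have e : INR 12 = 12 by simpl; lra.
  lra.
have H1 := Pr_le u hn.
have H2 : INR #|Bset u| * c <= 12 * c by apply: Rmult_le_compat_r; lra.
have H3 : / (L + 1) < / L by apply: Rinv_lt_contravar; nra.
apply: (Rle_lt_trans _ _ _ H1); apply: (Rle_lt_trans _ _ _ S).
apply: (Rle_lt_trans _ _ _ H2); rewrite /c; lra.
Qed.

Theorem lemma5 (n : nat) (u : V n) :
  (1 <= n)%N -> Rlt (Pr (E1u u)) (Rdiv (IZR 3) (ln (Rplus (INR n) R1))).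
Proof.
move=> hn; rewrite /Rdiv; exact: main_bound.
Qed.
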